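(* Let $K$ be a Noetherian $\Sigma$-pseudofield such that $C:=K^\sigma$ is a $\Sigma_1$-closed pseudofield, let $A\in\mathrm{GL}_n(K)$, let $L$ be a Picard–Vessiot pseudofield for $\sigma Y=AY$ over $K$ with fundamental matrix $F$, and let $G=\mathrm{Aut}_\Sigma(L/K)\subseteq\mathrm{GL}_n(C)$ be its Galois group. If $H$ is a closed subgroup of $G$ with $L^H=K$, then $H=G$.
   Context: All rings are commutative with $1$. Fix $\Sigma_0=\mathbb Z$ with generator $\sigma$, a finite abelian group $\Sigma_1=\mathbb Z/t_1\mathbb Z\oplus\dots\oplus\mathbb Z/t_s\mathbb Z$ ($t_i\ge2$), and $\Sigma=\Sigma_0\oplus\Sigma_1$. For a subgroup $\Sigma'\subseteq\Sigma$, a $\Sigma'$-ring is a ring with an action of $\Sigma'$ by ring automorphisms; $\Sigma'$-ideals are $\Sigma'$-stable ideals; $K^\sigma$ is the ring of $\sigma$-invariants. A $\Sigma'$-ring is $\Sigma'$-simple if its only $\Sigma'$-ideals are $0$ and itself ($\neq0$). A ring is absolutely flat if every module over it is flat. A $\Sigma'$-pseudofield is an absolutely flat $\Sigma'$-simple ring; Noetherian if it is a Noetherian ring. A $\Sigma_1$-pseudofield $C$ is $\Sigma_1$-closed if $\sqrt I=\mathbb I(\mathbb V(I))$ for every $m$ and every $\Sigma_1$-ideal $I$ of $C\{y_1,\dots,y_m\}_{\Sigma_1}$ (polynomial ring in indeterminates $\tau y_i$, $\tau\in\Sigma_1$), with $\mathbb V$ the common zero set and $\mathbb I$ the ideal of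 vanishing polynomials. A Picard–Vessiot pseudofield for $\sigma Y=AY$ is a Noetherian $\Sigma$-pseudofield $L$ containing $K$ as a $\Sigma$-subring such that there is $F\in\mathrm{GL}_n(L)$ with $\sigma(F)=AF$, $L^\sigma=K^\sigma$, and $L$ is generated over $K$ by the entries of $F$. $\mathrm{Aut}_\Sigma(L/K)$ is the group of $\Sigma$-automorphisms of $L$ fixing $K$ pointwise, embedded in $\mathrm{GL}_n(C)$ by $\gamma\mapsto F^{-1}\gamma(F)$. A subgroup $H\subseteq G$ is closed if it is the set of $M\in G$ at which all elements of some set $E\subseteq C\{x_{ij},1/\det X\}_{\Sigma_1}$ vanish (with $\tau x_{ij}$ evaluated as $\tau(M_{ij})$). *)

(* Defs.v *)
From HB Require Import structures.
From mathcomp Require Import all_boot all_order all_algebra all_fingroup.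
From mathcomp Require Import mpoly.
Unset Printing Implicit Defensive.
Import GRing.Theory.
Local Open Scope ring_scope.

(* Sigma_0 = Z is generated by sigma; Sigma_1 is an arbitrary finite abelian
   group gT (every such group is a direct sum of cyclic groups Z/t_i, t_i>=2).
   Actions by ring automorphisms are given by a ring endomorphism sigma
   (required bijective) and a group action act : gT -> {rmorphism R -> R}. *)

Definition nvars (gT : finGroupType) (m : nat) := #|{: 'I_m * gT}|.
Definition nmvars (gT : finGroupType) (n : nat) := #|{: 'I_n * 'I_n * gT}|.

Section Defs.
Context {gT : finGroupType}.

Definition is_raut {R : comNzRingType} (f : R -> R) :=
  [/\ f 1 = 1, {morph f : x y / x + y}, {morph f : x y / x * y} & bijective f].

Definition is_Sig1_action {R : comNzRingType} (act : gT -> {rmorphism R -> R}) :=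
  (forall g, bijective (act g)) /\ (forall x, act 1%g x = x) /\
  (forall g h x, act (g * h)%g x = act g (act h x)).

Definition is_Sig_action {R : comNzRingType} (sigma : {rmorphism R -> R})
    (act : gT -> {rmorphism R -> R}) :=
  [/\ bijective sigma, is_Sig1_action act &
      forall g x, sigma (act g x) = act g (sigma x)].

Definition is_ideal {R : comNzRingType} (I : R -> Prop) :=
  [/\ I 0, (forall x y, I x -> I y -> I (x + y)) & (forall a x, I x -> I (a * x))].

Definition is_Sig1_ideal {R : comNzRingType} (act : gT -> {rmorphism R -> R})
    (I : R -> Prop) :=
  is_ideal I /\ forall g x, I x -> I (act g x).

Definition is_Sig_ideal {R : comNzRingType} (sigma : {rmorphism R -> R})
    (act : gT -> {rmorphism R -> R}) (I : R -> Prop) :=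
  [/\ is_Sig1_ideal act I, (forall x, I x -> I (sigma x)) &
      (forall x, I (sigma x) -> I x)].

Definition trivial_or_full {R : comNzRingType} (I : R -> Prop) :=
  (forall x, I x -> x = 0) \/ (forall x, I x).

Definition Sig1_simple {R : comNzRingType} (act : gT -> {rmorphism R -> R}) :=
  (1 : R) != 0 /\ forall I, is_Sig1_ideal act I -> trivial_or_full I.

Definition Sig_simple {R : comNzRingType} (sigma : {rmorphism R -> R})
    (act : gT -> {rmorphism R -> R}) :=
  (1 : R) != 0 /\ forall I, is_Sig_ideal sigma act I -> trivial_or_full I.

(* absolutely flat = von Neumann regular *)
Definition absolutely_flat (R : comNzRingType) := forall a : R, exists b, a = a * a * b.

Definition noetherian (R : comNzRingType) :=
  forall I : R -> Prop, is_ideal I ->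
  exists s : seq R, forall x, I x <->
    exists c : 'I_(size s) -> R, x = \sum_(i < size s) c i * s`_i.

Definition Sig1_pseudofield {R : comNzRingType} (act : gT -> {rmorphism R -> R}) :=
  absolutely_flat R /\ Sig1_simple act.

Definition Sig_pseudofield {R : comNzRingType} (sigma : {rmorphism R -> R})
    (act : gT -> {rmorphism R -> R}) :=
  absolutely_flat R /\ Sig_simple sigma act.

(* The Sigma_1-polynomial ring C{y_1..y_m}_{Sigma_1}: variables tau y_j are
   indexed by pairs (j, tau) : 'I_m * gT, encoded in 'I_(nvars gT m). *)

Definition var_shift (m : nat) (g : gT) (v : 'I_(nvars gT m)) : 'I_(nvars gT m) :=
  enum_rank ((enum_val v).1, (g * (enum_val v).2)%g).

(* action of g on C{y}: on coefficients, and tau y_j |-> (g tau) y_j *)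
Definition act_poly {C : comNzRingType} (act : gT -> {rmorphism C -> C}) (m : nat)
    (g : gT) (p : {mpoly C[nvars gT m]}) : {mpoly C[nvars gT m]} :=
  mmap ((@mpolyC _ C) \o act g) (fun v => 'X_(var_shift m g v)) p.

(* evaluation at a point c in C^m: tau y_j |-> tau (c_j) *)
Definition eval_pt {C : comNzRingType} (act : gT -> {rmorphism C -> C}) (m : nat)
    (c : 'I_m -> C) (p : {mpoly C[nvars gT m]}) : C :=
  p.@[fun v => act (enum_val v).2 (c (enum_val v).1)].

Definition rad {R : comNzRingType} (I : R -> Prop) : R -> Prop :=
  fun x => exists k, I (x ^+ k).

Definition Sig1_closed {C : comNzRingType} (act : gT -> {rmorphism C -> C}) :=
  Sig1_pseudofield act /\
  forall (m : nat) (I : {mpoly C[nvars gT m]} -> Prop),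
    is_Sig1_ideal (fun g => act_poly act m g) I ->
    forall p, rad I p <->
      (forall c : 'I_m -> C, (forall q, I q -> eval_pt act m c q = 0) ->
         eval_pt act m c p = 0).

Definition is_GL {R : comNzRingType} {n : nat} (A : 'M[R]_n) :=
  exists B : 'M[R]_n, A *m B = 1%:M /\ B *m A = 1%:M.

(* L is generated over phi(K) by the entries of F as a Sigma-pseudofield:
   every subset containing phi(K) and the entries of F that is closed under
   ring operations, sigma, sigma^{-1}, Sigma_1 and quasi-inverses is all of L *)
Definition pseudofield_generated {K L : comNzRingType} (phi : K -> L)
    (sigma : {rmorphism L -> L}) (act : gT -> {rmorphism L -> L})
    {n : nat} (F : 'M[L]_n) :=
  forall S : L -> Prop,
    (forall y, S (phi y)) -> (forall i j, S (F i j)) ->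
    (forall x y, S x -> S y -> S (x + y)) ->
    (forall x, S x -> S (- x)) ->
    (forall x y, S x -> S y -> S (x * y)) ->
    (forall x, S x -> S (sigma x)) -> (forall x, S (sigma x) -> S x) ->
    (forall g x, S x -> S (act g x)) ->
    (forall a b, S a -> a = a * a * b -> b = b * b * a -> S b) ->
    forall x, S x.

Definition is_PV_pseudofield {K L : comNzRingType}
    (sigmaK : {rmorphism K -> K}) (actK : gT -> {rmorphism K -> K})
    (sigmaL : {rmorphism L -> L}) (actL : gT -> {rmorphism L -> L})
    (phi : {rmorphism K -> L}) {n : nat} (A : 'M[K]_n) (F : 'M[L]_n) :=
  [/\ is_Sig_action sigmaL actL, Sig_pseudofield sigmaL actL & noetherian L] /\
  [/\ injective phi, (forall x, phi (sigmaK x) = sigmaL (phi x)) &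
      (forall g x, phi (actK g x) = actL g (phi x))] /\
  (is_GL F /\ map_mx sigmaL F = map_mx phi A *m F) /\
  (forall x : L, sigmaL x = x -> exists y : K, sigmaK y = y /\ x = phi y) /\
  pseudofield_generated phi sigmaL actL F.

Definition is_Sig_aut_over {K L : comNzRingType} (phi : K -> L)
    (sigmaL : {rmorphism L -> L}) (actL : gT -> {rmorphism L -> L}) (gam : L -> L) :=
  [/\ is_raut gam, (forall x, gam (sigmaL x) = sigmaL (gam x)),
      (forall g x, gam (actL g x) = actL g (gam x)) & (forall y, gam (phi y) = phi y)].

(* gam corresponds to M in GL_n(C) under gam |-> F^{-1} gam(F), i.e. gam(F) = F M
   (C embedded into L by phi \o iota) *)
Definition aut_matrix {C L : comNzRingType} (j : C -> L) {n : nat} (F : 'M[L]_n)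
    (gam : L -> L) (M : 'M[C]_n) :=
  map_mx gam F = F *m map_mx j M.

(* closed subsets of GL_n(C): variables tau x_{ij}, indexed by ('I_n * 'I_n * gT) *)

Definition eval_mx {C : comNzRingType} (act : gT -> {rmorphism C -> C}) {n : nat}
    (M : 'M[C]_n) (p : {mpoly C[nmvars gT n]}) : C :=
  p.@[fun v => let: (i, j, g) := enum_val v in act g (M i j)].

End Defs.

(* Main.v *)
Require Import Defs.
From HB Require Import structures.
From mathcomp Require Import all_boot all_order all_algebra all_fingroup.
From mathcomp Require Import mpoly.
From mathcomp Require Import ring zify.
Import GRing.Theory.
Local Open Scope ring_scope.
Lemma idem_of_list (L : comNzRingType) (I : L -> Prop) (s : seq L) :
  absolutely_flat L -> is_ideal I -> (forall x, x \in s -> I x) ->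
  exists e, [/\ I e, e * e = e & forall x, x \in s -> x = x * e].
Proof.
move=> hf [I0 ID IM]; elim: s => [|a s IH] hs.
  by exists 0; split => //; rewrite mulr0.
have [e [Ie ee He]] : exists e, [/\ I e, e * e = e & forall x, x \in s -> x = x * e].
  by apply: IH => x hx; apply: hs; rewrite inE hx orbT.
have [b hb] := hf a.
have Ia : I a by apply: hs; rewrite inE eqxx.
have If : I (a * b) by rewrite mulrC; apply: IM.
have ff : (a * b) * (a * b) = a * b by rewrite mulrA -[a * b * a]mulrA [b * a]mulrC mulrA -hb.
have af : a * (a * b) = a by rewrite mulrA -hb.
exists (e + a * b - e * (a * b)); split.
- apply: (ID _ _ (ID _ _ Ie If)).
  by have := IM (-1) _ (IM e _ If); rewrite mulN1r.
- move: ee ff; set f := a * b => ee ff; ring: ee ff.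
- move=> x; rewrite inE => /orP [/eqP -> | hx].
    move: af; set f := a * b => af; ring: af.
  have xe := He x hx; move: xe; set f := a * b => xe.
  have -> : x * (e + f - e * f) = x * e + x * f - (x * e) * f by ring.
  by rewrite -xe addrK.
Qed.

Lemma idem_gen (L : comNzRingType) (I : L -> Prop) :
  absolutely_flat L -> noetherian L -> is_ideal I ->
  exists e, [/\ I e, e * e = e & forall x, I x -> x = x * e].
Proof.
move=> hf hn hI; have [s hs] := hn I hI.
have sI : forall x, x \in s -> I x.
  move=> x hx; apply/hs; exists (fun j => ((j : nat) == index x s)%:R).
  have hi : (index x s < size s)%N by rewrite index_mem.
  rewrite (bigD1 (Ordinal hi)) //= eqxx mul1r big1 ?addr0 ?nth_index //.
  by move=> j /negbTE; rewrite -val_eqE /= => ->; rewrite mul0r.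
have [e [Ie ee He]] := @idem_of_list L I s hf hI sI.
exists e; split => // x /hs [c ->]; rewrite mulr_suml; apply: eq_bigr => i _.
by rewrite -mulrA -He // mem_nth.
Qed.
Inductive span (L : comNzRingType) (k : nat) (S : 'rV[L]_k -> Prop) : 'rV[L]_k -> Prop :=
| span0 : @span L k S 0
| spanC a d u : S d -> @span L k S u -> @span L k S (a *: d + u).

Arguments span {L k}.
Arguments span0 {L k S}.
Arguments spanC {L k S}.

Definition suppLe (L : comNzRingType) k (u : 'rV[L]_k) (m : nat) :=
  forall j : 'I_k, (m < j)%N -> u ord0 j = 0.
Arguments suppLe {L k}.

Lemma addf0 (L : comNzRingType) (g : L -> L) : {morph g : x y / x + y} -> g 0 = 0.
Proof. by move=> hg; apply: (@addrI _ (g 0)); rewrite -hg !addr0. Qed.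
Arguments addf0 {L g}.

Lemma descent (L : comNzRingType) (k : nat) (Gam : (L -> L) -> Prop)
  (W : 'rV[L]_k -> Prop) :
  absolutely_flat L -> noetherian L ->
  W 0 -> (forall u v, W u -> W v -> W (u + v)) -> (forall a u, W u -> W (a *: u)) ->
  (forall g, Gam g -> {morph g : x y / x + y}) ->
  (forall g, Gam g -> {morph g : x y / x * y}) ->
  (forall g, Gam g -> bijective g) ->
  (forall g u, Gam g -> (W u <-> W (map_mx g u))) ->
  forall u, W u -> span (fun d => W d /\ forall g, Gam g -> map_mx g d = d) u.
Proof.
move=> hf hn W0 WD WZ Gadd Gmul Gbij GW.
have WB : forall u v, W u -> W v -> W (u - v).
  by move=> u v hu hv; apply: WD => //; rewrite -scaleN1r; apply: WZ.
have g0 : forall g, Gam g -> g 0 = 0 by move=> g hg; exact: (addf0 (Gadd g hg)).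
pose J (m : 'I_k) (a : L) := exists u, [/\ W u, suppLe u m & u ord0 m = a].
have Jid : forall m, is_ideal (J m).
  move=> m; split.
  - by exists 0; split => //; [move=> j _ |]; rewrite mxE.
  - move=> x y [u [hu su <-]] [v [hv sv <-]]; exists (u + v); split.
    + exact: WD.
    + by move=> j hj; rewrite mxE su ?sv ?addr0.
    + by rewrite mxE.
  - move=> a x [u [hu su <-]]; exists (a *: u); split.
    + exact: WZ.
    + by move=> j hj; rewrite mxE su ?mulr0.
    + by rewrite mxE.
have [e he] := fin_all_exists (fun m => @idem_gen L (J m) hf hn (Jid m)).
have einv : forall g m, Gam g -> g (e m) = e m.
  move=> g m hg; have [g' gK Kg] := Gbij g hg.
  case: (he m) => [[u [hu su ue]] ee eJ].
  have h1 : J m (g (e m)).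
    exists (map_mx g u); split.
    - exact/(GW g u hg).1.
    - by move=> j hj; rewrite mxE su ?g0.
    - by rewrite mxE ue.
  have h2 : J m (g' (e m)).
    exists (map_mx g' u); split.
    - apply/(GW g _ hg).2.
      have -> : map_mx g (map_mx g' u) = u by apply/matrixP => i j; rewrite !mxE Kg.
      done.
    - by move=> j hj; rewrite mxE su // -{1}(g0 g hg) gK.
    - by rewrite mxE ue.
  have a1 := eJ _ h1.
  have a2 := eJ _ h2.
  have a3 : e m = e m * g (e m).
    by have := congr1 g a2; rewrite Gmul // !Kg.
  by rewrite a1 mulrC -a3.
pose Red (m : 'I_k) u := [/\ W u, suppLe u m, u ord0 m = e m &
   forall j : 'I_k, (j < m)%N -> u ord0 j * e j = 0].
have Runiq : forall m u v, Red m u -> Red m v -> u = v.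
  move=> m u v [hu su um ru] [hv sv vm rv].
  pose d := u - v.
  have hd : W d by apply: WB.
  have dE : forall j, d ord0 j = u ord0 j - v ord0 j by move=> j; rewrite !mxE.
  suff dz : forall t (j : 'I_k), (k <= j + t)%N -> d ord0 j = 0.
    apply/matrixP => i j; rewrite ord1; apply/eqP; rewrite -subr_eq0 -dE (dz k) //.
    by rewrite leq_addl.
  elim=> [|t IH] j hj.
    by have := ltn_ord j; lia.
  case: (leqP k (j + t)) => hjt; first exact: IH.
  have sd : suppLe d j by move=> j' hj'; apply: IH; lia.
  have Jd : J j (d ord0 j) by exists d.
  case: (he j) => _ _ eJ; have dj := eJ _ Jd.
  case: (ltngtP m j) => hmj.
  - by rewrite dE su // sv // subrr.
  - by rewrite dj dE mulrBl ru // rv // subrr.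
  - have -> : j = m by apply: val_inj.
    by rewrite dE um vm subrr.
have Rinv : forall m u g, Red m u -> Gam g -> map_mx g u = u.
  move=> m u g hR hg; apply: (Runiq m) => //; case: hR => hu su um ru; split.
  - exact/(GW g u hg).1.
  - by move=> j hj; rewrite mxE su ?g0.
  - by rewrite mxE um einv.
  - by move=> j hj; rewrite mxE -(einv g j hg) -Gmul // ru ?g0.
have Rex : forall m : 'I_k, exists u, Red m u.
  suff H : forall t (m : 'I_k), (m < t)%N -> exists u, Red m u.
    by move=> m; apply: (H k).
  elim=> [|t IH] m hm; first by [].
  case: (ltnP m t) => hmt; first exact: IH.
  have [U hU] : exists U : 'I_k -> 'rV[L]_k, forall j : 'I_k, (j < m)%N -> Red j (U j).
    suff : forall j : 'I_k, exists u : 'rV[L]_k, (j < m)%N -> Red j u.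
      by case/fin_all_exists => U hU; exists U.
    move=> j; case: (ltnP j m) => hj.
    - have [u hu] : exists u, Red j u by apply: IH; lia.
      by exists u.
    - by exists 0.
  suff H : forall s, exists v, [/\ W v, suppLe v m, v ord0 m = e m &
      forall j : 'I_k, (j < m)%N -> (m <= j + s)%N -> v ord0 j * e j = 0].
    have [v [hv sv vm rv]] := H m.
    by exists v; split => // j hj; apply: rv => //; lia.
  elim=> [|s IHs].
    case: (he m) => [[u [hu su um]] _ _]; exists u; split => // j hj hj2; lia.
  have [v [hv sv vm rv]] := IHs.
  case: (leqP m s) => hms.
    by exists v; split => // j hj _; apply: rv => //; lia.
  have hj0 : (m - s.+1 < k)%N by have := ltn_ord m; lia.
  pose j0 := Ordinal hj0.
  have hj0m : (j0 < m)%N by rewrite /=; lia.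
  case: (hU j0 hj0m) => hU1 hU2 hU3 hU4.
  exists (v - v ord0 j0 *: U j0); split.
  + by apply: WB => //; exact: WZ.
  + move=> j hj; rewrite !mxE (sv j) // (hU2 j) ?mulr0 ?subr0 //=; lia.
  + by rewrite !mxE vm (hU2 m) ?mulr0 ?subr0.
  + move=> j hj hj2; rewrite !mxE; case: (leqP m (j + s)) => hjs.
      rewrite (hU2 j) ?mulr0 ?subr0 ?rv //=; lia.
    have -> : j = j0 by apply: val_inj => /=; lia.
    case: (he j0) => _ ee _.
    by rewrite hU3 mulrBl -mulrA ee subrr.
suff H : forall t u, W u -> (forall j : 'I_k, (t <= j)%N -> u ord0 j = 0) ->
    span (fun d => W d /\ forall g, Gam g -> map_mx g d = d) u.
  by move=> u hu; apply: (H k) => // j hj; have := ltn_ord j; lia.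
elim=> [|t IH] u hu hz.
  have -> : u = 0 by apply/matrixP => i j; rewrite ord1 hz ?mxE.
  exact: span0.
case: (ltnP t k) => htk; last first.
  by apply: IH => // j hj; have := ltn_ord j; lia.
pose m := Ordinal htk.
have [R hR] := Rex m.
have Rinv' := Rinv m R _ hR.
case: hR => hR1 hR2 hR3 hR4.
have Ju : J m (u ord0 m) by exists u; split => // j hj; apply: hz; rewrite /= in hj; lia.
case: (he m) => _ _ eJ; have um := eJ _ Ju.
have -> : u = u ord0 m *: R + (u - u ord0 m *: R) by rewrite addrC subrK.
apply: spanC; first by split => // g hg; exact: Rinv'.
apply: IH; first by apply: WB => //; exact: WZ.
move=> j hj; rewrite !mxE; case: (ltnP t j) => htj.
  by rewrite (hz j) // ?(hR2 j) ?mulr0 ?subr0 //; lia.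
have -> : j = m by apply: val_inj => /=; lia.
by rewrite hR3 -um subrr.
Qed.
Lemma raut_nmod (L : comNzRingType) (g : L -> L) : is_raut g -> nmod_morphism g.
Proof. by case=> _ hadd _ _; split => //; exact: addf0. Qed.
Lemma raut_mon (L : comNzRingType) (g : L -> L) : is_raut g -> monoid_morphism g.
Proof. by case=> h1 _ hm _; split. Qed.
Definition raut_rm (L : comNzRingType) (g : L -> L) (h : is_raut g) : {rmorphism L -> L} :=
  HB.pack g (GRing.isNmodMorphism.Build L L g (@raut_nmod L g h))
            (GRing.isMonoidMorphism.Build L L g (@raut_mon L g h)).
Lemma raut_rmE (L : comNzRingType) (g : L -> L) (h : is_raut g) x : @raut_rm L g h x = g x.
Proof. by []. Qed.
Arguments raut_rm {L g}.
Arguments raut_rmE {L g}.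
Lemma eq_meval_ext (R : comNzRingType) N (p : {mpoly R[N]}) (v w : 'I_N -> R) :
  (forall i, v i = w i) -> p.@[v] = p.@[w].
Proof.
move=> h; rewrite !mevalE; apply: eq_bigr => m _; congr (_ * _).
by apply: eq_bigr => i _; rewrite h.
Qed.

Theorem proposition18 (gT : finGroupType) (Hab : abelian [set: gT])
  (C K L : comRingType)
  (actC : gT -> {rmorphism C -> C})
  (sigmaK : {rmorphism K -> K}) (actK : gT -> {rmorphism K -> K})
  (sigmaL : {rmorphism L -> L}) (actL : gT -> {rmorphism L -> L})
  (iota : {rmorphism C -> K}) (phi : {rmorphism K -> L})
  (n : nat) (A : 'M[K]_n) (F : 'M[L]_n)
  (G H : 'M[C]_n -> Prop) :
  (* K is a Noetherian Sigma-pseudofield *)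
  is_Sig_action sigmaK actK -> Sig_pseudofield sigmaK actK -> noetherian K ->
  (* C = K^sigma (via iota), a Sigma_1-closed pseudofield with the induced action *)
  injective iota ->
  (forall c, sigmaK (iota c) = iota c) ->
  (forall x, sigmaK x = x -> exists c, x = iota c) ->
  (forall g c, iota (actC g c) = actK g (iota c)) ->
  is_Sig1_action actC -> Sig1_closed actC ->
  (* A in GL_n(K), L a PV pseudofield with fundamental matrix F *)
  is_GL A ->
  is_PV_pseudofield sigmaK actK sigmaL actL phi A F ->
  (* G = Aut_Sigma(L/K) embedded in GL_n(C) *)
  (forall M, G M <-> exists gam, is_Sig_aut_over phi sigmaL actL gam /\
                         aut_matrix (phi \o iota) F gam M) ->
  (* H is a subgroup of G *)
  (forall M, H M -> G M) -> H 1%:M ->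
  (forall M N, H M -> H N -> H (M *m N)) ->
  (forall M, H M -> exists N, H N /\ M *m N = 1%:M) ->
  (* H is closed *)
  (exists E : {mpoly C[nmvars gT n]} -> Prop,
     forall M, H M <-> (G M /\ forall p, E p -> eval_mx actC M p = 0)) ->
  (* L^H = K *)
  (forall x : L,
     (forall gam M, is_Sig_aut_over phi sigmaL actL gam -> H M ->
        aut_matrix (phi \o iota) F gam M -> gam x = x) ->
     exists y : K, x = phi y) ->
  forall M, H M <-> G M.
Proof.
move=> hKact hKpf hKn iinj isig iinv iact hCact hCcl hA hPV hG hHG hH1 hHM hHinv [E hE] hfix M.
split; first exact: hHG.
move=> GM; apply/hE; split => // p Ep.
case: hPV => [[hLact [hLflat _] hLn] [[phiinj phisig phiact] [[[Fi [FFi FiF]] hFA] [hLsig hgen]]]].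

have psiinj : injective (phi \o iota) by move=> x y /phiinj /iinj.
pose lift (M' : 'M[C]_n) := map_mx (phi \o iota) M'.
pose ev (Y : 'M[L]_n) (v : 'I_(nmvars gT n)) := let: (i, j, g) := enum_val v in actL g (Y i j).
pose lq (v : 'I_(nmvars gT n)) : {mpoly L[nmvars gT n]} := let: (i, j, g) := enum_val v in
   \sum_(l < n) (actL g (Fi i l))%:MP * ('X_(enum_rank (l, j, g)) : {mpoly L[nmvars gT n]}).
have lqE : forall Y v, (lq v).@[ev Y] = ev (Fi *m Y) v.
  move=> Y v; rewrite /lq /ev; case: (enum_val v) => [[i j] g].
  rewrite (big_morph _ (mevalD _) (meval0 _)) mxE rmorph_sum; apply: eq_bigr => l _.
  by rewrite mevalM mevalC mevalXU enum_rankK rmorphM.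
pose xM (M' : 'M[C]_n) (v : 'I_(nmvars gT n)) := let: (i, j, g) := enum_val v in actC g (M' i j).
pose f : {mpoly L[nmvars gT n]} := \sum_(m <- msupp p)
    (phi (iota p@_m)) *: \prod_(v < nmvars gT n) (lq v) ^+ (m v).
have fE : forall M', f.@[ev (F *m lift M')] = phi (iota (eval_mx actC M' p)).
  move=> M'; rewrite /f (big_morph _ (mevalD _) (meval0 _)) /eval_mx mevalE.
  rewrite (rmorph_sum iota) (rmorph_sum phi); apply: eq_bigr => m _.
  rewrite mevalZ !rmorphM; congr (_ * _).
  rewrite (big_morph _ (mevalM _) (meval1 _)) (rmorph_prod iota) (rmorph_prod phi).
  apply: eq_bigr => v _.
  have mX : forall (q : {mpoly L[nmvars gT n]}) w k, (q ^+ k).@[w] = q.@[w] ^+ k.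
    by move=> q w; elim => [|k IH]; rewrite ?expr0 ?meval1 // !exprS mevalM IH.
  rewrite mX lqE (rmorphXn iota) (rmorphXn phi); congr (_ ^+ _).
  rewrite mulmxA FiF mul1mx /ev /xM; case: (enum_val v) => [[i j] g].
  by rewrite mxE /= iact phiact.
pose ms := msupp f.
pose mono (mm : 'X_{1..nmvars gT n}) (Y : 'M[L]_n) :=
  \prod_(v < nmvars gT n) ev Y v ^+ mm v.
pose c0 := \row_(i < size ms) f@_(nth 0%MM ms i).
have fsum : forall Y, f.@[ev Y] = \sum_(i < size ms) c0 ord0 i * mono (nth 0%MM ms i) Y.
  move=> Y; rewrite mevalE (big_nth 0%MM) big_mkord; apply: eq_bigr => i _.
  by rewrite mxE.
pose W (c : 'rV[L]_(size ms)) := forall M', H M' ->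
  \sum_(i < size ms) c ord0 i * mono (nth 0%MM ms i) (F *m lift M') = 0.
have Wc0 : W c0.
  move=> M' HM'; rewrite -fsum fE; case/hE: HM' => _ h.
  by rewrite h // !rmorph0.
pose Gam (g : L -> L) := exists Mg, [/\ is_Sig_aut_over phi sigmaL actL g, H Mg &
   aut_matrix (phi \o iota) F g Mg].
have monoC : forall g mm Y, is_Sig_aut_over phi sigmaL actL g ->
    g (mono mm Y) = mono mm (map_mx g Y).
  move=> g mm Y [hr _ hact _].
  rewrite -(raut_rmE hr) rmorph_prod; apply: eq_bigr => v _.
  rewrite rmorphXn raut_rmE; congr (_ ^+ _).
  by rewrite /ev; case: (enum_val v) => [[i j] g']; rewrite hact mxE.
have sumC : forall g (c : 'rV[L]_(size ms)) Y, is_Sig_aut_over phi sigmaL actL g ->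
    g (\sum_(i < size ms) c ord0 i * mono (nth 0%MM ms i) Y) =
    \sum_(i < size ms) (map_mx g c) ord0 i * mono (nth 0%MM ms i) (map_mx g Y).
  move=> g c Y hg; have hr := hg; case: hr => hr _ _ _.
  rewrite -(raut_rmE hr) rmorph_sum; apply: eq_bigr => i _.
  by rewrite rmorphM !raut_rmE monoC // mxE.
have liftC : forall g Mg M', is_Sig_aut_over phi sigmaL actL g ->
    aut_matrix (phi \o iota) F g Mg ->
    map_mx g (F *m lift M') = F *m lift (Mg *m M').
  move=> g Mg M' [hr _ _ hphi] hMg.
  have -> : map_mx g (F *m lift M') = map_mx (raut_rm hr) (F *m lift M').
    by apply/matrixP => i j; rewrite !mxE.
  rewrite map_mxM.
  have -> : map_mx (raut_rm hr) (lift M') = lift M'.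
    by apply/matrixP => i j; rewrite !mxE raut_rmE /= hphi.
  have -> : map_mx (raut_rm hr) F = map_mx g F.
    by apply/matrixP => i j; rewrite !mxE.
  by rewrite hMg /lift map_mxM mulmxA.
have GW : forall g c, Gam g -> (W c <-> W (map_mx g c)).
  move=> g c [Mg [hg HMg hMg]]; split.
  - move=> hc M' HM'.
    have [Ni [HNi MNi]] := hHinv Mg HMg.
    have -> : F *m lift M' = map_mx g (F *m lift (Ni *m M')).
      by rewrite (liftC g Mg) // mulmxA MNi mul1mx.
    rewrite -sumC // hc; last exact: hHM.
    by case: hg => hr _ _ _; rewrite -(raut_rmE hr) rmorph0.
  - move=> hc M' HM'.
    case: (hg) => [[_ hadd _ [g' gK Kg]] _ _ _].
    rewrite -[LHS]gK sumC // (liftC g Mg) // hc; last exact: hHM.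
    by rewrite -{1}(addf0 hadd) gK.
have W0 : W 0 by move=> M' _; rewrite big1 // => i _; rewrite mxE mul0r.
have WD : forall u v, W u -> W v -> W (u + v).
  move=> u v hu hv M' HM'.
  rewrite (eq_bigr (fun i => u ord0 i * mono (nth 0%MM ms i) (F *m lift M') +
                             v ord0 i * mono (nth 0%MM ms i) (F *m lift M'))).
    by rewrite big_split /= hu // hv // addr0.
  by move=> i _; rewrite mxE mulrDl.
have WZ : forall a u, W u -> W (a *: u).
  move=> a u hu M' HM'.
  rewrite (eq_bigr (fun i => a * (u ord0 i * mono (nth 0%MM ms i) (F *m lift M')))).
    by rewrite -mulr_sumr hu // mulr0.
  by move=> i _; rewrite mxE mulrA.
have Gadd : forall g, Gam g -> {morph g : x y / x + y}.
  by move=> g [Mg [[[_ h _ _] _ _ _] _ _]].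
have Gmul : forall g, Gam g -> {morph g : x y / x * y}.
  by move=> g [Mg [[[_ _ h _] _ _ _] _ _]].
have Gbij : forall g, Gam g -> bijective g.
  by move=> g [Mg [[[_ _ _ h] _ _ _] _ _]].
have Wsp := @descent L (size ms) Gam W hLflat hLn W0 WD WZ Gadd Gmul Gbij GW c0 Wc0.
have [g0 [hg0 hM0]] := (hG M).1 GM.
have Q : forall c, span (fun d => W d /\ forall g, Gam g -> map_mx g d = d) c ->
   \sum_(i < size ms) c ord0 i * mono (nth 0%MM ms i) (F *m lift M) = 0.
  move=> c hc; elim: hc => [|a d u [Wd dinv] _ IH].
    by rewrite big1 // => i _; rewrite mxE mul0r.
  rewrite (eq_bigr (fun i => a * (d ord0 i * mono (nth 0%MM ms i) (F *m lift M)) +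
                       u ord0 i * mono (nth 0%MM ms i) (F *m lift M))); last first.
    by move=> i _; rewrite !mxE mulrDl mulrA.
  rewrite big_split /= IH addr0 -mulr_sumr.
  have dfix : forall i, g0 (d ord0 i) = d ord0 i.
    move=> i.
    have hd : forall gam M', is_Sig_aut_over phi sigmaL actL gam -> H M' ->
        aut_matrix (phi \o iota) F gam M' -> gam (d ord0 i) = d ord0 i.
      move=> gam M' hgam HM' hM'.
      have := dinv gam (ex_intro _ M' (And3 hgam HM' hM')).
      by move/matrixP/(_ ord0 i); rewrite mxE.
    have [y ->] := hfix _ hd.
    by case: hg0 => [_ _ _ ->].
  have -> : F *m lift M = map_mx g0 (F *m lift 1%:M) by rewrite (liftC g0 M) // mulmx1.
  rewrite (eq_bigr (fun i => (map_mx g0 d) ord0 i *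
                 mono (nth 0%MM ms i) (map_mx g0 (F *m lift 1%:M)))); last first.
    by move=> i _; rewrite mxE dfix.
  rewrite -sumC // Wd //.
  by case: hg0 => [[_ hadd _ _] _ _ _]; rewrite (addf0 hadd) mulr0.
have := Q c0 Wsp; rewrite -fsum fE => h.
by apply: psiinj; rewrite /= h !rmorph0.
Qed.
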